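(* Let $K$ be a field of characteristic $0$, let $E$ be the infinite-dimensional unitary Grassmann algebra over $K$ with even part $E_0$, and let $A=\begin{pmatrix} E_0 & E\\ 0 & E\end{pmatrix}$. Let $n\geq 1$, let $u_0,\dots,u_{n+1},v_1,v_2,w_1,\dots,w_{2n}\in K\langle X\rangle$ and $\sigma\in S_{2n}$, and set \[f=u_0[v_1,v_2]u_1[w_{\sigma(1)},w_{\sigma(2)}]u_2\cdots u_n[w_{\sigma(2n-1)},w_{\sigma(2n)}]u_{n+1}.\] Then \[f-(-1)^{\sigma}u_0[v_1,v_2][w_1,w_2]\cdots[w_{2n-1},w_{2n}]u_1u_2\cdots u_{n+1}\in T(A).\]
   Context: All algebras are associative and unitary over $K$; $K\langle X\rangle$ is the free unitary associative algebra on $X=\{x_1,x_2,\dots\}$, and $T(A)$ is the ideal of polynomial identities of $A$. $E$ is generated by anticommuting $e_1,e_2,\dots$ and $E_0$ is the span of basis products $e_{i_1}\cdots e_{i_k}$ ($i_1<\dots<i_k$) of even length $k$. $[a,b]=ab-ba$, and $(-1)^\sigma$ is the sign of $\sigma$. *)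

(* Defs.v *)
From HB Require Import structures.
From mathcomp Require Import all_boot all_order all_algebra all_fingroup.
From mathcomp Require Import finmap.
Set Implicit Arguments. Unset Strict Implicit. Unset Printing Implicit Defensive.
Import Order.TTheory GRing.Theory.
Local Open Scope fset_scope.
Local Open Scope ring_scope.

(* Polynomials are represented by (noncommutative) expressions; membership in T(A)
   only depends on the element of K<X> they denote, since it is defined via
   evaluation (i.e. via the algebra homomorphisms K<X> -> A). *)
Inductive ncpoly (K : Type) : Type :=
  | NVar of nat
  | NConst of K
  | NAdd of ncpoly K & ncpoly K
  | NOpp of ncpoly K
  | NMul of ncpoly K & ncpoly K.
Arguments NVar {K}.

Definition ncsub (K : Type) (p q : ncpoly K) := NAdd p (NOpp q).
Definition nccomm (K : Type) (p q : ncpoly K) := ncsub (NMul p q) (NMul q p).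
Definition ncprod (K : ringType) (s : seq (ncpoly K)) : ncpoly K :=
  foldr (@NMul K) (NConst 1) s.

(* An element of E is given by its coordinates on the basis
   e_S = e_{i_1} ... e_{i_k}  (S = {i_1 < ... < i_k} a finite subset of nat). *)
Section Grassmann.
Variable K : fieldType.

Definition gr := {fset nat} -> K.

(* e_T e_U = (-1)^{#{(t,u) in T x U | u < t}} e_{T cup U} for disjoint T, U *)
Definition gsign (T U : {fset nat}) : K :=
  (-1) ^+ (\sum_(t <- T) count (fun u => u < t)%N U)%N.

Definition gmul (a b : gr) : gr := fun S =>
  \sum_(T <- fpowerset S) gsign T (S `\` T) * a T * b (S `\` T).
Definition gadd (a b : gr) : gr := fun S => a S + b S.
Definition gopp (a : gr) : gr := fun S => - a S.
Definition gzero : gr := fun _ => 0.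
Definition gscal (c : K) : gr := fun S => if S == fset0 then c else 0.

Definition gfin (a : gr) : Prop :=
  exists N : nat, forall S : {fset nat}, a S != 0 -> forall i, i \in S -> (i < N)%N.
Definition geven (a : gr) : Prop :=
  forall S : {fset nat}, a S != 0 -> ~~ odd #|` S|.

(* ((a, b), c) stands for the matrix [[a, b], [0, c]] *)
Definition algA := (gr * gr * gr)%type.

Definition inA (x : algA) : Prop :=
  [/\ gfin x.1.1, geven x.1.1, gfin x.1.2 & gfin x.2].

Definition Aadd (x y : algA) : algA :=
  ((gadd x.1.1 y.1.1, gadd x.1.2 y.1.2), gadd x.2 y.2).
Definition Aopp (x : algA) : algA := ((gopp x.1.1, gopp x.1.2), gopp x.2).
Definition Amul (x y : algA) : algA :=
  ((gmul x.1.1 y.1.1, gadd (gmul x.1.1 y.1.2) (gmul x.1.2 y.2)), gmul x.2 y.2).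
Definition Aconst (c : K) : algA := ((gscal c, gzero), gscal c).
Definition Azero : algA := ((gzero, gzero), gzero).

Fixpoint Aeval (phi : nat -> algA) (p : ncpoly K) : algA :=
  match p with
  | NVar i => phi i
  | NConst c => Aconst c
  | NAdd p q => Aadd (Aeval phi p) (Aeval phi q)
  | NOpp p => Aopp (Aeval phi p)
  | NMul p q => Amul (Aeval phi p) (Aeval phi q)
  end.

Definition TA (f : ncpoly K) : Prop :=
  forall phi : nat -> algA, (forall i, inA (phi i)) -> Aeval phi f = Azero.

End Grassmann.

(* Main.v *)
Require Import Defs.
From HB Require Import structures.
From mathcomp Require Import all_boot all_order all_algebra all_fingroup.
From mathcomp Require Import finmap.
From mathcomp Require Import boolp ring zify.
Set Implicit Arguments. Unset Strict Implicit. Unset Printing Implicit Defensive.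
Import Order.TTheory GRing.Theory.
Local Open Scope fset_scope.
Local Open Scope ring_scope.

Definition ninv (T U : {fset nat}) : nat :=
  (\sum_(t <- T) count (fun u => (u < t)%N) U)%N.

Lemma perm_fsetU (A B : {fset nat}) :
  (forall x, x \in A -> x \notin B) -> perm_eq (A `|` B) (A ++ B).
Proof.
move=> dAB; apply: uniq_perm.
- exact: fset_uniq.
- rewrite cat_uniq !fset_uniq andbT /=; apply/hasPn => x xB.
  by apply/negP => /dAB; rewrite xB.
- by move=> x; rewrite mem_cat in_fsetU.
Qed.

Lemma ninv_Ul (A B C : {fset nat}) : (forall x, x \in A -> x \notin B) ->
  ninv (A `|` B) C = (ninv A C + ninv B C)%N.
Proof. by move=> d; rewrite /ninv (perm_big _ (perm_fsetU d)) big_cat. Qed.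

Lemma ninv_Ur (A B C : {fset nat}) : (forall x, x \in B -> x \notin C) ->
  ninv A (B `|` C) = (ninv A B + ninv A C)%N.
Proof.
move=> d; rewrite /ninv -big_split /=; apply: eq_bigr => t _.
by rewrite (seq.permP (perm_fsetU d)) count_cat.
Qed.

Lemma ninv_sym (A B : {fset nat}) : (forall x, x \in A -> x \notin B) ->
  (ninv A B + ninv B A = #|`A| * #|`B|)%N.
Proof.
move=> d; rewrite /ninv.
have -> : (\sum_(t <- B) count (fun u => (u < t)%N) A
   = \sum_(t <- B) \sum_(u <- A) (u < t)%N)%N.
  by apply: eq_bigr => t _; rewrite -sum1_count big_mkcond /=; apply: eq_bigr => u _; case: ifP.
rewrite exchange_big /= -big_split /= card_fset_sum1 big_distrl /=.
apply: eq_big_seq => a aA; rewrite mul1n.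
have -> : (\sum_(i <- B) (a < i)%N = count (fun u => a < u)%N B)%N.
  by rewrite -sum1_count [RHS]big_mkcond /=; apply: eq_bigr => u _; case: ifP.
rewrite (_ : #|`B| = size B) // -(count_predC (fun u => (u < a)%N) B) /=.
congr (_ + _)%N; apply: eq_in_count => u uB /=.
rewrite ltn_neqAle -leqNgt; case: (a =P u) => [ua|] //=.
by move: (d _ aA); rewrite ua uB.
Qed.


Lemma sub_pow (R : nmodType) (S T : {fset nat}) (F : {fset nat} -> R) : T `<=` S ->
  \sum_(T1 <- fpowerset T) F T1 = \sum_(T1 <- fpowerset S | T1 `<=` T) F T1.
Proof.
move=> TS; rewrite [RHS]big_fset_condE; apply: eq_fbigl => x; rewrite !inE /= !fpowersetE.
by case: (boolP (x `<=` T)) => h //=; rewrite ?andbT ?andbF ?(fsubset_trans h TS).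
Qed.

Lemma reidx (R : nmodType) (S T1 : {fset nat}) (F : {fset nat} -> R) : T1 `<=` S ->
  \sum_(T <- fpowerset S | T1 `<=` T) F T = \sum_(U <- fpowerset (S `\` T1)) F (T1 `|` U).
Proof.
move=> T1S; rewrite -big_filter -(big_map (fsetU T1) predT F); apply: perm_big.
apply: uniq_perm.
- by rewrite filter_uniq // fset_uniq.
- rewrite map_inj_in_uniq ?fset_uniq // => U V; rewrite !fpowersetE => hU hV e.
  apply/fsetP => x; move/fsetP/(_ x): e; rewrite !in_fsetU.
  case: (boolP (x \in T1)) => //= xT1.
  have -> : (x \in U) = false by apply/negP => /(fsubsetP hU); rewrite in_fsetD xT1.
  by have -> : (x \in V) = false by apply/negP => /(fsubsetP hV); rewrite in_fsetD xT1.
- move=> T; rewrite mem_filter fpowersetE; apply/andP/mapP.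
  + case=> h1 h2; exists (T `\` T1); first by rewrite fpowersetE fsetSD.
    by apply/fsetP => x; rewrite !inE; case: (boolP (x \in T1)) => //= /(fsubsetP h1) ->.

  + case=> U; rewrite fpowersetE => hU ->; split; first exact: fsubsetUl.
    apply/fsubsetP => x; rewrite in_fsetU; case/orP; first by apply/fsubsetP.
    by move/(fsubsetP hU); rewrite in_fsetD => /andP[].
Qed.

Section Ring.
Variable K : fieldType.

Lemma gsignE (T U : {fset nat}) : gsign K T U = (-1) ^+ ninv T U.
Proof. by []. Qed.

Lemma gsign_cocycle (A B C : {fset nat}) :
  (forall x, x \in A -> x \notin B) -> (forall x, x \in A -> x \notin C) ->
  (forall x, x \in B -> x \notin C) ->
  gsign K (A `|` B) C * gsign K A B = gsign K A (B `|` C) * gsign K B C.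
Proof.
move=> dAB dAC dBC; rewrite !gsignE -!exprD ninv_Ul // ninv_Ur //.
by congr (_ ^+ _); lia.
Qed.

Lemma gmulA (a b c : gr K) : gmul (gmul a b) c = gmul a (gmul b c).
Proof.
apply: funext => S; rewrite /gmul.
under eq_bigr => T _ do rewrite mulr_sumr mulr_suml.
rewrite (eq_big_seq (fun T => \sum_(T1 <- fpowerset S | T1 `<=` T)
   gsign K T (S `\` T) * (gsign K T1 (T `\` T1) * a T1 * b (T `\` T1)) * c (S `\` T))); last first.
  by move=> T; rewrite fpowersetE => TS; rewrite (sub_pow _ TS).
rewrite (exchange_big_dep predT) //=; apply: eq_big_seq => T1; rewrite fpowersetE => T1S.
rewrite (reidx _ T1S) mulr_sumr; apply: eq_big_seq => U; rewrite fpowersetE => US.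
have dU : forall x, x \in T1 -> x \notin U.
  by move=> x xT; apply/negP => /(fsubsetP US); rewrite in_fsetD xT.
have dR : forall x, x \in T1 -> x \notin (S `\` T1) `\` U.
  by move=> x xT; rewrite !in_fsetD xT andbF.
have dUR : forall x, x \in U -> x \notin (S `\` T1) `\` U.
  by move=> x xU; rewrite in_fsetD xU.
have e1 : (T1 `|` U) `\` T1 = U.
  apply/fsetP => x; rewrite !inE; case: (boolP (x \in T1)) => //= xT.
  by rewrite (negbTE (dU _ xT)).
have e2 : S `\` (T1 `|` U) = (S `\` T1) `\` U by rewrite fsetDDl.
have e3 : S `\` T1 = U `|` ((S `\` T1) `\` U).
  apply/fsetP => x; rewrite !inE; case: (boolP (x \in U)) => //= xU.
  by move/(fsubsetP US): xU; rewrite in_fsetD.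
rewrite e1 e2.
have hs := gsign_cocycle dU dR dUR.
rewrite -e3 in hs.
transitivity ((gsign K (T1 `|` U) ((S `\` T1) `\` U) * gsign K T1 U) * (a T1 * b U * c ((S `\` T1) `\` U))); first by ring.
by rewrite hs; ring.
Qed.

Lemma gsign0l (U : {fset nat}) : gsign K fset0 U = 1.
Proof. by rewrite gsignE /ninv big_seq_fset0. Qed.

Lemma gsign0r (U : {fset nat}) : gsign K U fset0 = 1.
Proof. by rewrite gsignE /ninv big1_fset. Qed.

Lemma gmul1 (a : gr K) : gmul (gscal 1) a = a.
Proof.
apply: funext => S; rewrite /gmul (big_fsetD1 fset0) ?fpowersetE ?fsub0set //.
rewrite gsign0l /gscal eqxx mul1r mul1r fsetD0 big1_fset; first exact: Monoid.mulm1.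
move=> T; rewrite in_fsetD1 => /andP[/negbTE -> _] _; by rewrite mulr0 mul0r.
Qed.

Lemma gmul1r (a : gr K) : gmul a (gscal 1) = a.
Proof.
apply: funext => S; rewrite /gmul (big_fsetD1 S) ?fpowersetE ?fsubset_refl //.
rewrite fsetDv gsign0r /gscal eqxx mul1r mulr1 big1_fset; first exact: Monoid.mulm1.
move=> T; rewrite in_fsetD1 fpowersetE => /andP[ST TS] _.
have -> : (S `\` T == fset0) = false.
  by rewrite fsetD_eq0; apply/negP => h; move/negP: ST; apply; rewrite eqEfsubset h andbT.
by rewrite mulr0.
Qed.

Definition ER : Type := gr K.
HB.instance Definition _ := Choice.copy ER ({fset nat} -> K).

Lemma gaddA : associative (@gadd K).
Proof. by move=> x y z; apply: funext => S; rewrite /gadd addrA. Qed.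
Lemma gaddC : commutative (@gadd K).
Proof. by move=> x y; apply: funext => S; rewrite /gadd addrC. Qed.
Lemma gadd0 : left_id (@gzero K) (@gadd K).
Proof. by move=> x; apply: funext => S; rewrite /gadd /gzero add0r. Qed.
Lemma gaddN : left_inverse (@gzero K) (@gopp K) (@gadd K).
Proof. by move=> x; apply: funext => S; rewrite /gadd /gzero /gopp addNr. Qed.

HB.instance Definition _ := GRing.isZmodule.Build ER gaddA gaddC gadd0 gaddN.

Lemma gmulDl : left_distributive (@gmul K) (@gadd K).
Proof.
move=> x y z; apply: funext => S; rewrite /gmul /gadd -big_split /=.
by apply: eq_bigr => T _; rewrite !mulrDr !mulrDl.
Qed.
Lemma gmulDr : right_distributive (@gmul K) (@gadd K).
Proof.
move=> x y z; apply: funext => S; rewrite /gmul /gadd -big_split /=.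
by apply: eq_bigr => T _; rewrite !mulrDr.
Qed.
Lemma gone_neq0 : (gscal (1 : K) : ER) != 0.
Proof.
apply/eqP => /(congr1 (fun f : ER => f fset0)); rewrite /gscal eqxx /=.
by move/eqP; rewrite oner_eq0.
Qed.

Lemma gmulA' : associative (@gmul K).
Proof. by move=> x y z; rewrite gmulA. Qed.
Lemma gmulDl' : @left_distributive ER ER (@gmul K) +%R.
Proof. exact: gmulDl. Qed.
Lemma gmulDr' : @right_distributive ER ER (@gmul K) +%R.
Proof. exact: gmulDr. Qed.

HB.instance Definition _ := @GRing.Zmodule_isNzRing.Build ER
  (gscal 1 : ER) (@gmul K : ER -> ER -> ER) gmulA' gmul1 gmul1r gmulDl' gmulDr' gone_neq0.

End Ring.


Lemma compl_pow (R : nmodType) (S : {fset nat}) (F : {fset nat} -> R) :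
  \sum_(T <- fpowerset S) F T = \sum_(T <- fpowerset S) F (S `\` T).
Proof.
rewrite -(big_map (fun T => S `\` T) predT F); apply: perm_big; apply: uniq_perm.
- exact: fset_uniq.
- rewrite map_inj_in_uniq ?fset_uniq // => U V; rewrite !fpowersetE => hU hV e.
  by rewrite -(fsetDK hU) e fsetDK.
- move=> T; rewrite fpowersetE; apply/idP/mapP.
  + by move=> h; exists (S `\` T); rewrite ?fpowersetE ?fsubsetDl // fsetDK.
  + by case=> U _ ->; exact: fsubsetDl.
Qed.

Section Par.
Variable K : fieldType.
Local Notation ER := (ER K).

Lemma mulE (x y : ER) S : (x * y) S = gmul x y S. Proof. by []. Qed.
Lemma addE (x y : ER) S : (x + y) S = x S + y S. Proof. by []. Qed.
Lemma oppE (x : ER) S : (- x) S = - x S. Proof. by []. Qed.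
Lemma zeroE S : (0 : ER) S = 0. Proof. by []. Qed.

Lemma gsign_sym (T U : {fset nat}) : (forall x, x \in T -> x \notin U) ->
  gsign K U T = (-1) ^+ (#|`T| * #|`U|) * gsign K T U.
Proof.
move=> d; rewrite !gsignE -(ninv_sym d) -exprD -signr_odd -[RHS]signr_odd.
by rewrite !oddD; case: (odd (ninv T U)); case: (odd (ninv U T)).
Qed.

Lemma twist (x y : ER) S : (y * x) S = \sum_(T <- fpowerset S)
   (-1) ^+ (#|`T| * #|`(S `\` T)|) * (gsign K T (S `\` T) * x T * y (S `\` T)).
Proof.
rewrite mulE /gmul compl_pow; apply: eq_big_seq => T; rewrite fpowersetE => TS.
rewrite fsetDK // gsign_sym; last by move=> z zT; rewrite in_fsetD zT.
by ring.
Qed.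

Definition ev (a : ER) : ER := fun S => if odd #|`S| then 0 else a S.
Definition od (a : ER) : ER := fun S => if odd #|`S| then a S else 0.

Lemma ev_od (a : ER) : a = ev a + od a.
Proof. by apply: funext => S; rewrite addE /ev /od; case: ifP; rewrite ?add0r ?addr0. Qed.

Lemma card_split (S T : {fset nat}) : T `<=` S -> #|`S| = (#|`T| + #|`(S `\` T)|)%N.
Proof. by move=> TS; rewrite cardfsDS // subnKC // fsubset_leq_card. Qed.

Lemma ev_central (a b : ER) : ev a * b = b * ev a.
Proof.
apply: funext => S; rewrite twist mulE /gmul; apply: eq_big_seq => T _.
rewrite /ev; case: (boolP (odd #|`(S `\` T)|)) => h; first by rewrite !mulr0.
by rewrite -signr_odd oddM (negbTE h) andbF /= expr0 mul1r.
Qed.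

Lemma od_anti (a b : ER) : od b * od a = - (od a * od b).
Proof.
apply: funext => S; rewrite twist oppE mulE /gmul -sumrN; apply: eq_big_seq => T _.
rewrite /od; case: (boolP (odd #|`T|)) => h; last by rewrite !(mulr0, mul0r, oppr0).
case: (boolP (odd #|`(S `\` T)|)) => h2; last by rewrite !(mulr0, oppr0).
by rewrite -signr_odd oddM h h2 /= expr1 mulN1r.
Qed.

Lemma comm_od (x y : ER) : x * y - y * x = od x * od y + od x * od y.
Proof.
transitivity ((ev x + od x) * (ev y + od y) - (ev y + od y) * (ev x + od x)).
  by rewrite -!ev_od.
rewrite !mulrDl !mulrDr (ev_central y (ev x)) (ev_central y (od x)).
rewrite -(ev_central x (od y)) (od_anti x y).
by apply: funext => S; rewrite !addE !oppE !addE !oppE; ring.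
Qed.

Definition iseven (a : ER) := forall S : {fset nat}, odd #|`S| -> a S = 0.

Lemma even_ev (a : ER) : iseven a -> ev a = a.
Proof. by move=> h; apply: funext => S; rewrite /ev; case: ifP => // /h ->. Qed.

Lemma even_central (a b : ER) : iseven a -> a * b = b * a.
Proof. by move=> h; rewrite -(even_ev h) ev_central. Qed.

Lemma even_add (a b : ER) : iseven a -> iseven b -> iseven (a + b).
Proof. by move=> ha hb S hS; rewrite addE ha ?hb ?addr0. Qed.

Lemma even_opp (a : ER) : iseven a -> iseven (- a).
Proof. by move=> ha S hS; rewrite oppE ha ?oppr0. Qed.

Lemma even_scal (c : K) : iseven (gscal c).
Proof.
move=> S hS; rewrite /gscal; case: eqP => // e; by move: hS; rewrite e cardfs0.
Qed.

Lemma even_mul_gen (a b : ER) S :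
  (forall T, T `<=` S -> a T * b (S `\` T) = 0) -> (a * b) S = 0.
Proof.
move=> h; rewrite mulE /gmul big1_fset // => T; rewrite fpowersetE => TS _.
by rewrite -mulrA h ?mulr0.
Qed.

Lemma even_mul (a b : ER) : iseven a -> iseven b -> iseven (a * b).
Proof.
move=> ha hb S hS; apply: even_mul_gen => T TS.
move: hS; rewrite (card_split TS) oddD.
by case: (boolP (odd #|`T|)) => h /= h2; [rewrite ha ?mul0r | rewrite hb ?mulr0].
Qed.

Lemma odd_mul_even (a b : ER) : iseven (od a * od b).
Proof.
move=> S hS; apply: even_mul_gen => T TS.
move: hS; rewrite (card_split TS) oddD /od.
by case: (odd #|`T|); case: (odd #|`(S `\` T)|); rewrite ?mul0r ?mulr0.
Qed.

Lemma geven_even (a : ER) : geven a -> iseven a.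
Proof. by move=> h S hS; apply/eqP; apply: contraTT hS => /h. Qed.
End Par.


Section Anti.
Variable R : ringType.
Variable G : nat -> R.
Hypothesis anti : forall i j, G i * G j = - (G j * G i).

Lemma sign_comm (n : nat) (x : R) : (-1) ^+ n * x = x * (-1) ^+ n.
Proof. by rewrite -signr_odd; case: (odd n); rewrite ?expr1 ?expr0 ?mulN1r ?mulrN1 ?mul1r ?mulr1. Qed.

Lemma move_past (a : R) (l : seq nat) : (forall k, a * G k = - (G k * a)) ->
  a * \prod_(k <- l) G k = (-1) ^+ (size l) * (\prod_(k <- l) G k * a).
Proof.
move=> ha; elim: l => [|b l IH]; first by rewrite big_nil expr0 mul1r mulr1 mul1r.
rewrite big_cons mulrA ha mulNr -[G b * a * _]mulrA IH /= exprS mulN1r mulNr.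
by rewrite mulrA -(sign_comm _ (G b)) !mulrA.
Qed.

Definition sw (x y k : nat) : nat := if k == x then y else if k == y then x else k.

Lemma swap_nat (x y m : nat) : (x < y)%N -> (y < m)%N ->
  \prod_(0 <= k < m) G (sw x y k) = - \prod_(0 <= k < m) G k.
Proof.
move=> xy ym.
have split3 : forall F : nat -> R, \prod_(0 <= k < m) F k =
   \prod_(0 <= k < x) F k * (F x * (\prod_(x.+1 <= k < y) F k *
     (F y * \prod_(y.+1 <= k < m) F k))).
  move=> F.
  rewrite (@big_cat_nat _ _ _ x 0 m) ?leq0n ?(ltnW (ltn_trans xy ym)) //.
  rewrite (@big_ltn _ _ _ x m) ?(ltn_trans xy ym) //.
  rewrite (@big_cat_nat _ _ _ y x.+1 m) ?(ltnW ym) //.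
  by rewrite (@big_ltn _ _ _ y m).
rewrite !split3.
have e1 : \prod_(0 <= k < x) G (sw x y k) = \prod_(0 <= k < x) G k.
  apply: eq_big_nat => k /andP[_ kx]; rewrite /sw.
  have -> : (k == x) = false by apply/eqP; lia.
  by have -> : (k == y) = false by apply/eqP; lia.
have e2 : \prod_(x.+1 <= k < y) G (sw x y k) = \prod_(x.+1 <= k < y) G k.
  apply: eq_big_nat => k /andP[k1 k2]; rewrite /sw.
  have -> : (k == x) = false by apply/eqP; lia.
  by have -> : (k == y) = false by apply/eqP; lia.
have e3 : \prod_(y.+1 <= k < m) G (sw x y k) = \prod_(y.+1 <= k < m) G k.
  apply: eq_big_nat => k /andP[k1 k2]; rewrite /sw.
  have -> : (k == x) = false by apply/eqP; lia.
  by have -> : (k == y) = false by apply/eqP; lia.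
rewrite e1 e2 e3 /sw eqxx.
have -> : (y == x) = false by apply/eqP; lia.
rewrite eqxx -mulrN; congr (_ * _).
rewrite !mulrA (move_past (index_iota x.+1 y) (fun k => anti y k)).
rewrite (move_past (index_iota x.+1 y) (fun k => anti x k)) -!mulrA.
by rewrite [G y * (G x * _)]mulrA anti mulNr !mulrN [G x * (G y * _)]mulrA.
Qed.

Lemma swap_nat' (x y m : nat) : x != y -> (x < m)%N -> (y < m)%N ->
  \prod_(0 <= k < m) G (sw x y k) = - \prod_(0 <= k < m) G k.
Proof.
move=> nxy xm ym; case: (ltngtP x y) => h; first exact: swap_nat.
- rewrite -(swap_nat h xm); apply: eq_bigr => k _; congr (G _); rewrite /sw.
  have nyx : (y == x) = false by rewrite eq_sym (negbTE nxy).
  have [->|kx] := eqVneq k x; first by rewrite ?eqxx ?(negbTE nxy).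
  by case: eqVneq.
- by move: nxy; rewrite h eqxx.
Qed.
End Anti.

Definition sn m (s : 'S_m) (k : nat) : nat :=
  match @insub nat (fun k => (k < m)%N) 'I_m k with
  | Some j => nat_of_ord (s j)
  | None => k end.

Lemma sn_val m (s : 'S_m) (j : 'I_m) : sn s j = s j.
Proof.
rewrite /sn; case: insubP => [j' _ e|]; last by rewrite ltn_ord.
by congr (nat_of_ord (s _)); apply: val_inj.
Qed.

Lemma val_tperm m (x y j : 'I_m) : nat_of_ord (tperm x y j) = sw x y j.
Proof.
rewrite /sw; case: tpermP => [->|->|jx jy]; first by rewrite eqxx.
- by case: eqP => [->|] //; rewrite eqxx.
- have -> : (nat_of_ord j == x) = false by apply/eqP => /val_inj.
  by have -> : (nat_of_ord j == y) = false by apply/eqP => /val_inj.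
Qed.

Lemma sn_tperm m (s : 'S_m) (x y : 'I_m) k :
  sn (tperm x y * s) k = sn s (sw x y k).
Proof.
rewrite {1}/sn; case: insubP => [j _ e|hk].
  by rewrite permM -e -sn_val val_tperm.
rewrite /sn /sw; case: eqP => [kx|_]; first by move: hk; rewrite kx ltn_ord.
case: eqP => [ky|_]; first by move: hk; rewrite ky ltn_ord.
by case: insubP => // j; rewrite (negbTE hk).
Qed.

Section Perm.
Variable R : ringType.
Variable G : nat -> R.
Hypothesis anti : forall i j, G i * G j = - (G j * G i).

Lemma perm_prod m (s : 'S_m) :
  \prod_(0 <= k < m) G (sn s k) = (-1) ^+ odd_perm s * \prod_(0 <= k < m) G k.
Proof.
have [ts -> ok] := prod_tpermP s.
elim: ts ok => [|t ts IH] /=.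
  move=> _; rewrite big_nil odd_perm1 expr0 mul1r; apply: eq_bigr => k _.
  rewrite /sn; case: insubP => // j _ <-; by rewrite perm1.
case/andP => dt ok; rewrite big_cons.
under eq_bigr => k _ do rewrite sn_tperm.
rewrite (swap_nat' (fun i j => anti (sn _ i) (sn _ j))) //.
- by rewrite IH // odd_mul_tperm dt /= signrN mulNr.
Qed.
End Perm.

Section Gen.
Variable R : ringType.

Lemma pairs_prod (H : nat -> R) n :
  \prod_(i <- iota 0 n) (H i.*2 * H i.*2.+1 + H i.*2 * H i.*2.+1)
  = (\prod_(0 <= k < n.*2) H k) *+ (2 ^ n).
Proof.
elim: n => [|n IH]; first by rewrite big_nil big_geq.
rewrite -addn1 iotaD big_cat /= big_seq1 IH addn1 doubleS.
rewrite big_nat_recr //= big_nat_recr //= -mulr2n mulrnAl mulrnAr -mulrnA expnSr.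
by rewrite add0n mulnC !mulrA.
Qed.

Lemma pull_central (l : seq nat) (a z : nat -> R) :
  (forall i x, z i * x = x * z i) ->
  \prod_(i <- l) (a i * z i) = \prod_(i <- l) z i * \prod_(i <- l) a i.
Proof.
move=> hz; rewrite prodrM_comm; last by move=> i j _ _; rewrite /GRing.comm hz.
by apply: commr_prod => i _; rewrite /GRing.comm hz.
Qed.
End Gen.


Section Main.
Variable K : fieldType.
Local Notation ER := (ER K).

Lemma Ae2_prod phi (l : seq (ncpoly K)) :
  ((Aeval phi (ncprod l)).2 : ER) = \prod_(p <- l) ((Aeval phi p).2 : ER).
Proof.
elim: l => [|p l IH]; first by rewrite big_nil.
by rewrite big_cons -IH.
Qed.

Lemma Ae2_comm phi (p q : ncpoly K) :
  ((Aeval phi (nccomm p q)).2 : ER) =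
  od ((Aeval phi p).2 : ER) * od ((Aeval phi q).2 : ER) +
  od ((Aeval phi p).2 : ER) * od ((Aeval phi q).2 : ER).
Proof. by rewrite -comm_od. Qed.

Lemma Aeval11_even phi : (forall i, geven (phi i).1.1) ->
  forall p : ncpoly K, iseven ((Aeval phi p).1.1 : ER).
Proof.
move=> h; elim => [i|c|p IHp q IHq|p IHp|p IHp q IHq].
- exact: (geven_even (h i)).
- exact: even_scal.
- have := even_add IHp IHq; exact.
- have := even_opp IHp; exact.
- have := even_mul IHp IHq; exact.
Qed.

Lemma gscal_sign (b : bool) : (gscal ((-1) ^+ b : K) : ER) = (-1) ^+ b.
Proof.
case: b; last by [].
apply: funext => S; rewrite !expr1 oppE (_ : (1 : ER) S = gscal 1 S) // /gscal; case: ifP => _ //.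
by rewrite oppr0.
Qed.

Lemma key (U Cv X Y : algA K) (b : bool) :
  (Cv.1.1 : ER) = 0 -> (X.2 : ER) = (-1) ^+ b * (Y.2 : ER) ->
  Aadd (Amul U (Amul Cv X)) (Aopp (Amul (Aconst ((-1) ^+ b)) (Amul U (Amul Cv Y))))
  = Azero K.
Proof.
case: U => [[u11 u12] u22]; case: Cv => [[c11 c12] c22].
case: X => [[x11 x12] x22]; case: Y => [[y11 y12] y22] /= h0 hx.
rewrite /Aadd /Aopp /Amul /Aconst /Azero /=.
have hs : forall z w : ER, z * ((-1) ^+ b * w) = (-1) ^+ b * (z * w).
  by move=> z w; rewrite mulrA -sign_comm mulrA.
have E1 : gadd (gmul u11 (gmul c11 x11))
   (gopp (gmul (gscal ((-1) ^+ b)) (gmul u11 (gmul c11 y11)))) = gzero K.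
  change ((u11 : ER) * ((c11 : ER) * (x11 : ER)) - (gscal ((-1) ^+ b : K) : ER) * ((u11 : ER) * ((c11 : ER) * (y11 : ER))) = 0).
  by rewrite h0 !mul0r !mulr0 subrr.
have E2 : gadd
    (gadd (gmul u11 (gadd (gmul c11 x12) (gmul c12 x22))) (gmul u12 (gmul c22 x22)))
    (gopp (gadd (gmul (gscal ((-1) ^+ b)) (gadd (gmul u11 (gadd (gmul c11 y12) (gmul c12 y22))) (gmul u12 (gmul c22 y22))))
       (gmul (gzero K) (gmul u22 (gmul c22 y22))))) = gzero K.
  change ((u11 : ER) * ((c11 : ER) * (x12 : ER) + (c12 : ER) * (x22 : ER)) + (u12 : ER) * ((c22 : ER) * (x22 : ER))
    - ((gscal ((-1) ^+ b : K) : ER) * ((u11 : ER) * ((c11 : ER) * (y12 : ER) + (c12 : ER) * (y22 : ER)) + (u12 : ER) * ((c22 : ER) * (y22 : ER)))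
       + 0 * ((u22 : ER) * ((c22 : ER) * (y22 : ER)))) = 0).
  by rewrite gscal_sign h0 hx !mul0r !add0r addr0 !hs -mulrDr subrr.
have E3 : gadd (gmul u22 (gmul c22 x22))
   (gopp (gmul (gscal ((-1) ^+ b)) (gmul u22 (gmul c22 y22)))) = gzero K.
  change ((u22 : ER) * ((c22 : ER) * (x22 : ER)) - (gscal ((-1) ^+ b : K) : ER) * ((u22 : ER) * ((c22 : ER) * (y22 : ER))) = 0).
  by rewrite gscal_sign hx !hs subrr.
by rewrite E1 E2 E3.
Qed.

End Main.


Unset Implicit Arguments.
Theorem lemma3p2 (K : fieldType) (charK0 : [pchar K] =i pred0)
  (n : nat) (hn : (0 < n)%N)
  (u : nat -> ncpoly K) (v1 v2 : ncpoly K) (w : nat -> ncpoly K)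
  (s : 'S_(n.*2)) :
  let ws := fun k : nat =>
    match @insub nat (fun k => (k < n.*2)%N) 'I_(n.*2) k with
    | Some j => w (nat_of_ord (s j))
    | None => w k
    end in
  let f := ncprod ([:: u 0%N; nccomm v1 v2] ++
             flatten [seq [:: u i.+1; nccomm (ws i.*2) (ws i.*2.+1)] | i <- iota 0 n]
             ++ [:: u n.+1]) in
  let g := ncprod ([:: u 0%N; nccomm v1 v2] ++
             [seq nccomm (w i.*2) (w i.*2.+1) | i <- iota 0 n]
             ++ [seq u i.+1 | i <- iota 0 n.+1]) in
  TA (ncsub f (NMul (NConst ((-1) ^+ odd_perm s)) g)).
Proof.
move=> ws f g phi hphi.
have hev : forall i, geven (phi i).1.1 by move=> i; case: (hphi i).
have wsE : forall k, ws k = w (sn s k) by move=> k; rewrite /ws /sn; case: insubP.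
pose e (p : ncpoly K) : ER K := (Aeval phi p).2.
pose O (k : nat) : ER K := od (e (w k)).
have anti : forall i j, O i * O j = - (O j * O i) by move=> i j; rewrite /O od_anti.
have H1 : ((Aeval phi (nccomm v1 v2)).1.1 : ER K) = 0.
  change (((Aeval phi v1).1.1 : ER K) * ((Aeval phi v2).1.1 : ER K)
     - ((Aeval phi v2).1.1 : ER K) * ((Aeval phi v1).1.1 : ER K) = 0).
  by rewrite (even_central _ (Aeval11_even hev v1)) subrr.
have H2 : ((Aeval phi (ncprod (flatten [seq [:: u i.+1; nccomm (ws i.*2) (ws i.*2.+1)] | i <- iota 0 n]
             ++ [:: u n.+1]))).2 : ER K) = (-1) ^+ odd_perm s *
      ((Aeval phi (ncprod ([seq nccomm (w i.*2) (w i.*2.+1) | i <- iota 0 n]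
             ++ [seq u i.+1 | i <- iota 0 n.+1]))).2 : ER K).
  rewrite !Ae2_prod big_cat big_flatten big_map big_seq1 big_cat !big_map.
  rewrite [iota 0 n.+1](_ : _ = iota 0 n ++ [:: n]); last by rewrite -addn1 iotaD.
  rewrite big_cat big_seq1.
  under eq_bigr => i _ do rewrite big_cons big_seq1 Ae2_comm !wsE.
  under [in RHS]eq_bigr => i _ do rewrite Ae2_comm.
  have cen : forall (a b : nat -> nat) i (x : ER K), (O (a i) * O (b i) + O (a i) * O (b i)) * x
      = x * (O (a i) * O (b i) + O (a i) * O (b i)).
    by move=> a b i x; apply: even_central; apply: even_add; apply: odd_mul_even.
  rewrite (@pull_central (ER K) (iota 0 n) (fun i => e (u i.+1)) _ (cen (fun i => sn s i.*2) (fun i => sn s i.*2.+1))).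
  rewrite (pairs_prod (fun k => O (sn s k))) (pairs_prod O) (perm_prod anti).
  by rewrite /= !mulrnAl mulrnAr !mulrA.
exact (@key K (Aeval phi (u 0%N)) _ _ _ _ H1 H2).
Qed.
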